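(* Let $F$, $H$ and $R$ be fixed monic polynomials in $\mathbb{F}_q[T]$ with $F\mid R$, and let $z$ be a non-negative integer with $z<\deg(R)$. Then \[ \sum_{\substack{A,B\in\mathbb{A}^+\\ \deg(AB)=z\\ AH\equiv B\ (\mathrm{mod}\ F)\\ AH\neq B\\ (ABH,R)=1}}\frac{1}{|AB|^{\frac{1}{2}}}\ll\frac{q^{\frac{z}{2}}(z+1)|H|}{|F|}. \]
   Context: $q$ is a power of an odd prime, $\mathbb{A}=\mathbb{F}_q[T]$, $\mathbb{A}^+$ is the set of monic polynomials in $\mathbb{A}$, and $|f|=q^{\deg(f)}$ for $f\in\mathbb{A}$. *)

(* Defs.v *)
From HB Require Import structures.
From mathcomp Require Import all_boot all_order all_algebra.
Set Implicit Arguments. Unset Strict Implicit. Unset Printing Implicit Defensive.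
Import Order.TTheory GRing.Theory Num.Theory.
Local Open Scope ring_scope.

(* All polynomials over the finite field K of size <= n (i.e. degree < n),
   listed without repetition: the coefficient vector c ranges over K^n. *)
Definition polys_upto (K : finFieldType) (n : nat) : seq {poly K} :=
  [seq \poly_(i < n) (c : seq K)`_i | c : n.-tuple K].

Definition pnorm (rT : rcfType) (K : finFieldType) (f : {poly K}) : rT :=
  (#|K|%:R) ^+ (size f).-1.

Definition pdeg (K : finFieldType) (f : {poly K}) : nat := (size f).-1.

(* The sum of Lemma 3.3: monic A, B with deg(AB) = z (so deg A, deg B <= z),
   AH = B mod F, AH <> B, (ABH, R) = 1, of 1/|AB|^(1/2). *)
Definition S33 (rT : rcfType) (K : finFieldType) (F H R : {poly K}) (z : nat) : rT :=
  \sum_(A <- polys_upto K z.+1)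
    \sum_(B <- polys_upto K z.+1 |
          [&& A \is monic, B \is monic, pdeg (A * B) == z,
              F %| A * H - B, A * H != B & coprimep (A * B * H) R])
      1 / Num.sqrt (pnorm rT (A * B)).

(* Main.v *)
Require Import Defs.
From HB Require Import structures.
From mathcomp Require Import all_boot all_order all_algebra.
From mathcomp Require Import zify ring lra.
Import Order.TTheory GRing.Theory Num.Theory.
Set Implicit Arguments. Unset Strict Implicit. Unset Printing Implicit Defensive.
Local Open Scope ring_scope.

Definition tup (K : finFieldType) n (p : {poly K}) : n.-tuple K := [tuple p`_i | i < n].

Lemma tup_inj (K : finFieldType) n (p1 p2 : {poly K}) :
  p1 \is monic -> p2 \is monic -> size p1 = n.+1 -> size p2 = n.+1 ->
  tup n p1 = tup n p2 -> p1 = p2.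
Proof.
move=> m1 m2 s1 s2 e; apply/polyP => i.
case: (ltngtP i n) => [lt|gt|->].
- have := congr1 (fun t => tnth t (Ordinal lt)) e.
  by rewrite /tup !tnth_mktuple.
- by rewrite !nth_default // ?s1 ?s2.
- have h1 : p1`_n = 1 by rewrite -(monicP m1) lead_coefE s1.
  have h2 : p2`_n = 1 by rewrite -(monicP m2) lead_coefE s2.
  by rewrite h1 h2.
Qed.

Lemma card_pair_bound (K : finFieldType) (T : finType) (S : {pred T})
  (U V : T -> {poly K}) u v :
  (forall x, x \in S -> [/\ U x \is monic, size (U x) = u.+1,
                           V x \is monic & size (V x) = v.+1]) ->
  {in S &, forall x y, U x = U y -> V x = V y -> x = y} ->
  (#|S| <= #|K| ^ (u + v))%N.
Proof.
move=> hS inj.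
have := @leq_card_in T _ (fun x => (tup u (U x), tup v (V x))) S.
rewrite card_prod !card_tuple -expnD; apply => x y hx hy [e1 e2].
have [a1 a2 a3 a4] := hS x hx; have [b1 b2 b3 b4] := hS y hy.
apply: (inj x y hx hy).
- by apply: (tup_inj (n:=u)) => //; apply: val_inj.
by apply: (tup_inj (n:=v)) => //; apply: val_inj.
Qed.

Lemma modeq_dvd (K : finFieldType) (p q d : {poly K}) : d %| p - q -> p %% d = q %% d.
Proof.
move=> h; apply/eqP; rewrite -subr_eq0.
have -> : p %% d - q %% d = (p - q) %% d by rewrite modpD modpN.
by apply/eqP/modp_eq0P.
Qed.

Lemma monic_divp (K : finFieldType) (p d : {poly K}) :
  p \is monic -> d \is monic -> (size d <= size p)%N -> p %/ d \is monic.
Proof.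
move=> mp md hs.
have d0 : d != 0 by apply: monic_neq0.
have q0 : p %/ d != 0 by rewrite divpN0.
have hr : (size (p %% d)%R < size (p %/ d * d)%R)%N.
  rewrite size_Mmonic //; apply: (@leq_trans (size d)); first by rewrite ltn_modp.
  have : (0 < size (p %/ d)%R)%N by rewrite size_poly_gt0.
  by case: (size (p %/ d)%R) => // n _; rewrite addSn leq_addl.
apply/monicP; rewrite -(lead_coef_Mmonic _ md) -(monicP mp).
by rewrite {2}(divp_eq p d) lead_coefDl.
Qed.

Lemma per_a (K : finFieldType) (T : finType) (S : {pred T}) (A B : T -> {poly K})
  (F H : {poly K}) a b :
  F \is monic -> H \is monic ->
  (forall x, x \in S -> [/\ A x \is monic, B x \is monic, size (A x) = a.+1,
      size (B x) = b.+1 & [/\ F %| A x * H - B x, A x * H != B x & coprimep F H]]) ->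
  {in S &, forall x y, A x = A y -> B x = B y -> x = y} ->
  (#|S| * #|K| ^ (size F).-1 <= #|K| ^ (a + b + (size H).-1))%N.
Proof.
move=> mF mH hS inj.
have q0 : (0 < #|K|)%N by apply/card_gt0P; exists 0.
set f := (size F).-1; set h := (size H).-1.
have sF : size F = f.+1 by rewrite /f prednK // size_poly_gt0 monic_neq0.
have sH : size H = h.+1 by rewrite /h prednK // size_poly_gt0 monic_neq0.
have F0 : F != 0 by apply: monic_neq0.
have H0 : H != 0 by apply: monic_neq0.
case: (pickP (mem S)) => [x0 hx0 | e]; last by rewrite (eq_card0 e).
suff [u [v [hb huv]]] : exists u v, (#|S| <= #|K| ^ (u + v))%N /\ (u + v + f <= a + b + h)%N.
  apply: leq_trans (leq_mul hb (leqnn _)) _; rewrite -expnD; exact: leq_pexp2l.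
case: (leqP f b) => hfb.
  exists a, (b - f)%N; split; last by lia.
  apply: (card_pair_bound (U := A) (V := fun x => B x %/ F)).
    move=> x /hS [mA mB sA sB _]; split => //.
      by apply: monic_divp => //; rewrite sB sF.
    by rewrite size_divp // sB sF /=; lia.
  move=> x y hx hy eA eQ; apply: (inj x y hx hy eA).
  have [_ _ _ _ [dx _ _]] := hS x hx; have [_ _ _ _ [dy _ _]] := hS y hy.
  rewrite (divp_eq (B x) F) (divp_eq (B y) F) eQ.
  by rewrite -(modeq_dvd dx) -(modeq_dvd dy) eA.
case: (leqP f a) => hfa.
  exists b, (a - f)%N; split; last by lia.
  apply: (card_pair_bound (U := B) (V := fun x => A x %/ F)).
    move=> x /hS [mA mB sA sB _]; split => //.
      by apply: monic_divp => //; rewrite sA sF.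
    by rewrite size_divp // sA sF /=; lia.
  move=> x y hx hy eB eQ; apply: (inj x y hx hy) => //.
  have [_ _ _ _ [dx _ cop]] := hS x hx; have [_ _ _ _ [dy _ _]] := hS y hy.
  rewrite (divp_eq (A x) F) (divp_eq (A y) F) eQ; congr (_ + _).
  apply: modeq_dvd; rewrite -(Gauss_dvdpl _ cop).
  have -> : (A x - A y) * H = (A x * H - B x) - (A y * H - B y) by rewrite eB; ring.
  exact: dvdp_sub.
have key : forall x, x \in S ->
   [/\ (A x * H - B x) %/ F \is monic, size ((A x * H - B x) %/ F) = (a + h - f).+1,
       (f <= a + h)%N & (A x * H - B x) %/ F * F = A x * H - B x].
  move=> x /hS [mA mB sA sB [dx nx _]].
  have sAH : size (A x * H) = (a + h).+1 by rewrite size_monicM // sA sH addSn addnS.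
  have nz : A x * H - B x != 0 by rewrite subr_eq0.
  have hle := dvdp_leq nz dx.
  have hlt : (size (B x) < size (A x * H)%R)%N.
    rewrite ltnNge; apply/negP => hc.
    have := leq_trans hle (size_polyD _ _); rewrite size_polyN.
    by rewrite (maxn_idPr hc) sF sB; lia.
  have sD : size (A x * H - B x) = (a + h).+1 by rewrite size_polyDl ?size_polyN // sAH.
  have mD : A x * H - B x \is monic.
    by apply/monicP; rewrite lead_coefDl ?size_polyN //; apply/monicP; rewrite monicMl.
  have hfah : (f <= a + h)%N by move: hle; rewrite sD sF.
  split => //; last exact: divpK.
    by apply: monic_divp => //; rewrite sD sF.
  by rewrite size_divp // sD sF /=; lia.
case: (leqP a b) => hab.
  exists a, (a + h - f)%N; split.
    apply: (card_pair_bound (U := A) (V := fun x => (A x * H - B x) %/ F)).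
      by move=> x hx; have [? ? ? ?] := key x hx; have [? ? ? ? ?] := hS x hx.
    move=> x y hx hy eA eG; apply: (inj x y hx hy eA).
    have [_ _ _ ex] := key x hx; have [_ _ _ ey] := key y hy.
    have : A x * H - ((A x * H - B x) %/ F * F) = A y * H - ((A y * H - B y) %/ F * F).
      by rewrite eG eA.
    by rewrite ex ey !opprB !addrA !(addrC (A _ * H)) !addrK.
  by have [_ _ ? _] := key x0 hx0; lia.
exists b, (a + h - f)%N; split.
  apply: (card_pair_bound (U := B) (V := fun x => (A x * H - B x) %/ F)).
    by move=> x hx; have [? ? ? ?] := key x hx; have [? ? ? ? ?] := hS x hx.
  move=> x y hx hy eB eG; apply: (inj x y hx hy) => //.
  have [_ _ _ ex] := key x hx; have [_ _ _ ey] := key y hy.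
  apply: (mulIf H0).
  have : (A x * H - B x) %/ F * F + B x = (A y * H - B y) %/ F * F + B y.
    by rewrite eG eB.
  by rewrite ex ey !subrK.
by have [_ _ ? _] := key x0 hx0; lia.
Qed.
Definition Pp (K : finFieldType) (F H R : {poly K}) (z : nat) (c d : (z.+1).-tuple K) : bool :=
     let A := \poly_(i < z.+1) (c : seq K)`_i in
     let B := \poly_(i < z.+1) (d : seq K)`_i in
      [&& A \is monic, B \is monic, pdeg (A * B) == z,
              F %| A * H - B, A * H != B & coprimep (A * B * H) R].

Lemma S33E (rT : rcfType) (K : finFieldType) (F H R : {poly K}) (z : nat) :
  S33 rT F H R z =
  \sum_(c : (z.+1).-tuple K) \sum_(d : (z.+1).-tuple K | Pp F H R c d)
     1 / Num.sqrt ((#|K|%:R : rT) ^+ z).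
Proof.
rewrite /S33 /polys_upto big_image /=.
apply: eq_bigr => c _.
rewrite /image_mem big_map big_enum_cond /=.
apply: eq_big => [d|d]; first by [].
rewrite /Pp => /and4P [_ _ /eqP hz _].
by rewrite /pnorm -/(pdeg _) hz.
Qed.

Lemma pf_inj (K : finFieldType) n (c d : n.-tuple K) :
  \poly_(i < n) (c : seq K)`_i = \poly_(i < n) (d : seq K)`_i -> c = d.
Proof.
move=> e; apply: eq_from_tnth => i.
have := congr1 (fun p : {poly K} => p`_i) e; rewrite !coef_poly ltn_ord.
by rewrite !(tnth_nth 0).
Qed.

Lemma count_bound (K : finFieldType) (F H R : {poly K}) (z : nat) :
  F \is monic -> H \is monic -> F %| R ->
  (#|[set x : (z.+1).-tuple K * (z.+1).-tuple K | Pp F H R x.1 x.2]| * #|K| ^ (size F).-1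
     <= z.+1 * #|K| ^ (z + (size H).-1))%N.
Proof.
move=> mF mH FR.
set pf := fun c : (z.+1).-tuple K => \poly_(i < z.+1) (c : seq K)`_i.
rewrite -sum1dep_card (partition_big (fun x => inord (pdeg (pf x.1)) : 'I_z.+1) xpredT) //=.
rewrite big_distrl /=.
rewrite -[X in (_ <= X * _)%N]card_ord -sum_nat_const.
apply: leq_sum => a _.
rewrite sum1dep_card.
have hle : (a <= z)%N by rewrite -ltnS.
apply: (@leq_trans (#|K| ^ (a + (z - a) + (size H).-1))); last by rewrite (subnKC hle).
apply: (@per_a K _ [set x : (z.+1).-tuple K * (z.+1).-tuple K |
           Pp F H R x.1 x.2 && (inord (pdeg (pf x.1)) == a)]
   (fun x => pf x.1) (fun x => pf x.2) F H a (z - a)%N mF mH).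
  move=> x; rewrite inE => /andP [hP /eqP ha].
  move: hP; rewrite /Pp -/(pf x.1) -/(pf x.2).
  case/and5P => mA mB /eqP hz dv /andP [ne cop].
  have sA0 : (size (pf x.1) <= z.+1)%N by apply: size_poly.
  have pA : pdeg (pf x.1) = a by rewrite -ha inordK // /pdeg; case: (size _) sA0.
  have sA : size (pf x.1) = a.+1.
    by rewrite -pA /pdeg prednK // size_poly_gt0 monic_neq0.
  have sB : size (pf x.2) = (z - a).+1.
    move: hz; rewrite /pdeg size_monicM ?monic_neq0 // sA addSn /=.
    have : (0 < size (pf x.2))%N by rewrite size_poly_gt0 monic_neq0.
    have e : forall n, (0 < n)%N -> (a + n).-1 = z -> n = (z - a).+1 by move=> n; lia.
    exact: e.
  split => //; split => //.
  rewrite coprimep_sym; apply: (coprimep_dvdl FR).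
  apply: (coprimep_dvdr _ cop); exact: dvdp_mull.
move=> [c1 d1] [c2 d2] _ _ /= e1 e2.
by rewrite (pf_inj e1) (pf_inj e2).
Qed.
Theorem lemma3p3 (rT : rcfType) :
  exists C : rT, 0 < C /\
  forall (K : finFieldType), odd #|K| ->
  forall (F H R : {poly K}) (z : nat),
    F \is monic -> H \is monic -> R \is monic ->
    F %| R -> (z < pdeg R)%N ->
    S33 rT F H R z <=
      C * (Num.sqrt ((#|K|%:R : rT) ^+ z) * (z.+1)%:R * pnorm rT H / pnorm rT F).
Proof.
exists 1; split => //.
move=> K _ F H R z mF mH _ FR _.
rewrite S33E pair_big_dep /=.
rewrite (eq_bigl (fun p => p \in [set x | Pp F H R x.1 x.2])); last by move=> p; rewrite inE.
rewrite sumr_const.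
have hN := count_bound z mF mH FR.
set N := #|_| in hN *.
set Q := (#|K|%:R : rT).
have Q0 : 0 < Q by rewrite ltr0n; apply/card_gt0P; exists 0.
set s := Num.sqrt (Q ^+ z).
have s0 : 0 < s by rewrite sqrtr_gt0 exprn_gt0.
have ss : s * s = Q ^+ z by rewrite -expr2 sqr_sqrtr // exprn_ge0 // ltW.
rewrite /pnorm -/Q.
set f := (size F).-1 in hN *; set h := (size H).-1 in hN *.
have Qf : 0 < Q ^+ f by rewrite exprn_gt0.
have hR : N%:R * Q ^+ f <= s * s * (z.+1)%:R * Q ^+ h.
  have := hN; rewrite -(ler_nat rT) !natrM !natrX -/Q ss exprD.
  by rewrite mulrA [_ * (Q ^+ z)]mulrC.
have e1 : s^-1 * N%:R = (N%:R * Q ^+ f) * (s * Q ^+ f)^-1.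
  by field; rewrite ?gt_eqF.
have e2 : s * (z.+1)%:R * Q ^+ h / Q ^+ f = (s * s * (z.+1)%:R * Q ^+ h) * (s * Q ^+ f)^-1.
  by field; rewrite ?gt_eqF.
have key : (1 / s) *+ N <= 1 * (s * (z.+1)%:R * Q ^+ h / Q ^+ f).
  rewrite div1r !mul1r -[s^-1 *+ N]mulr_natr e1 e2; apply: ler_wpM2r => //.
  by rewrite invr_ge0 ltW // mulr_gt0.
exact: key.
Qed.
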